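(* Let $\{\rho_n\}_{n\ge0},\{\beta_n\}_{n\ge0},\{\tau_n\}_{n\ge0},\{\gamma_n\}_{n\ge0}$ be sequences of complex numbers with $\rho_n\neq0$ and $\tau_n\neq0$ for all $n\ge0$, $\beta_0\neq0,\pm1$ and $\beta_n\neq0$ for $n\ge1$. Let $\{\mathcal{P}_n(\lambda)\}_{n\ge0}$ be the polynomials defined by $\mathcal{P}_0(\lambda)=1$, $\mathcal{P}_1(\lambda)=\rho_0(\lambda-\beta_0)$ and $$\mathcal{P}_{n+1}(\lambda)=\rho_n(\lambda-\beta_n)\mathcal{P}_n(\lambda)+\tau_n(\lambda-\gamma_n)\mathcal{P}_{n-1}(\lambda),\quad n\ge1.$$ Let $\{\alpha_n\}_{n\ge0}\subset\mathbb{R}\setminus\{0\}$ and consider the linear combinations $\mathcal{Q}_n(\lambda)=\mathcal{P}_n(\lambda)+\alpha_n\mathcal{P}_{n-1}(\lambda)$, $n\ge1$, with $\mathcal{Q}_0(\lambda)=\mathcal{P}_0(\lambda)=1$. Then there exist constants $p_n,q_n,r_n,s_n,t_n,u_n,v_n,w_n$ ($n\ge1$) such that $\{\mathcal{Q}_n(\lambda)\}$ satisfies the three term recurrence relation $$(p_n\lambda+q_n)\mathcal{Q}_{n+1}(\lambda)=(r_n\lambda^2+s_n\lambda+t_n)\mathcal{Q}_n(\lambda)+(u_n\lambda^2+v_n\lambda+w_n)\mathcal{Q}_{n-1}(\lambda),\quad n\ge1,$$ with $\mathcal{Q}_1(\lambda)=\rho_0(\lambda+\alpha_1\rho_0^{-1}-\beta_0)$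 and $\mathcal{Q}_0(\lambda)=1$.
   Context: $\lambda$ is a real or complex variable. The polynomials $\mathcal{P}_n$ generated by such a recurrence are called $R_I$ polynomials. *)

(* Defs.v *)
From mathcomp Require Import all_boot all_algebra.
From mathcomp Require Import reals complex.
Set Implicit Arguments. Unset Strict Implicit. Unset Printing Implicit Defensive.
Import GRing.Theory Num.Theory.
Local Open Scope ring_scope.

Section RI.
Variable R : realType.
Local Notation C := R[i].
Variables (rho beta tau gamma : nat -> C).

(* RI_pair n = (P_n, P_{n+1}) *)
Fixpoint RI_pair (n : nat) : {poly C} * {poly C} :=
  match n with
  | 0 => (1, rho 0 *: ('X - (beta 0)%:P))
  | m.+1 => let: (a, b) := RI_pair m in
            (b, rho m.+1 *: ('X - (beta m.+1)%:P) * b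
                + tau m.+1 *: ('X - (gamma m.+1)%:P) * a)
  end.

Definition RIpoly (n : nat) : {poly C} := (RI_pair n).1.

Variable alpha : nat -> R.
Definition RIQpoly (n : nat) : {poly C} :=
  match n with
  | 0 => 1
  | m.+1 => RIpoly m.+1 + ((alpha m.+1)%:C)%C *: RIpoly m
  end.
End RI.

(* Main.v *)
Require Import Defs.
From mathcomp Require Import all_boot all_algebra.
From mathcomp Require Import reals complex.
From mathcomp Require Import ring.
Import GRing.Theory Num.Theory.
Local Open Scope ring_scope.

Lemma RI_pair2 (R : realType) (rho beta tau gamma : nat -> R[i]) n :
  (RI_pair rho beta tau gamma n).2 = RIpoly rho beta tau gamma n.+1.
Proof. by rewrite /RIpoly /=; case: (RI_pair rho beta tau gamma n). Qed.

Lemma RI_rec (R : realType) (rho beta tau gamma : nat -> R[i]) m :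
  RIpoly rho beta tau gamma m.+2 =
   (rho m.+1)%:P * ('X - (beta m.+1)%:P) * RIpoly rho beta tau gamma m.+1
   + (tau m.+1)%:P * ('X - (gamma m.+1)%:P) * RIpoly rho beta tau gamma m.
Proof.
rewrite /RIpoly /=; have := @RI_pair2 _ rho beta tau gamma m.
case: (RI_pair rho beta tau gamma m) => a b /= ->.
by rewrite !mul_polyC.
Qed.

Lemma RI0 (R : realType) (rho beta tau gamma : nat -> R[i]) :
  RIpoly rho beta tau gamma 0 = 1.
Proof. by []. Qed.
Lemma RI1 (R : realType) (rho beta tau gamma : nat -> R[i]) :
  RIpoly rho beta tau gamma 1 = (rho 0)%:P * ('X - (beta 0)%:P).
Proof. by rewrite /RIpoly /= mul_polyC. Qed.

Theorem mainTheorem1 (R : realType) (rho beta tau gamma : nat -> R[i])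
  (alpha : nat -> R) :
  (forall n, rho n != 0) -> (forall n, tau n != 0) ->
  beta 0 != 0 -> beta 0 != 1 -> beta 0 != -1 ->
  (forall n, (1 <= n)%N -> beta n != 0) ->
  (forall n, alpha n != 0) ->
  [/\ RIQpoly rho beta tau gamma alpha 0 = 1,
      RIQpoly rho beta tau gamma alpha 1 =
        rho 0 *: ('X + ((alpha 1)%:C%C / rho 0 - beta 0)%:P) &
      forall n, (1 <= n)%N ->
      exists p q r s t u v w : R[i],
        [|| p != 0, q != 0, r != 0, s != 0, t != 0, u != 0, v != 0 | w != 0] /\
        (p *: 'X + q%:P) * RIQpoly rho beta tau gamma alpha n.+1 =
          (r *: 'X^2 + s *: 'X + t%:P) * RIQpoly rho beta tau gamma alpha n
          + (u *: 'X^2 + v *: 'X + w%:P) * RIQpoly rho beta tau gamma alpha n.-1].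
Proof.
move=> hrho htau _ _ _ _ _.
set P := RIpoly rho beta tau gamma.
have a_def k : RIQpoly rho beta tau gamma alpha k.+1 = P k.+1 + ((alpha k.+1)%:C)%C%:P * P k.
  by rewrite /= mul_polyC.
split.
- by [].
- rewrite a_def /P RI1 RI0 mulr1 -mul_polyC polyCD ?polyCB ?polyCN.
  have h0 := hrho 0.
  have e : rho 0 * ((alpha 1)%:C%C / rho 0) = (alpha 1)%:C%C.
    by rewrite mulrCA divff // mulr1.
  rewrite !mulrDr ?mulrBr -polyCM e; ring.
move=> [//|n] _.
set a := fun k => ((alpha k)%:C)%C.
set A1 := rho n.+1; set b1 := beta n.+1; set B1 := tau n.+1; set c1 := gamma n.+1.
set f1 := B1 - a n.+1 * A1.
set f0 := - B1 * c1 + a n.+1 * A1 * b1 - a n.+1 * a n.+2.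
case: n a_def @A1 @b1 @B1 @c1 @f1 @f0 => [|m] a_def A1 b1 B1 c1 f1 f0.
  exists 0, 1, 0, A1, (a 2 - A1 * b1), 0, f1, f0; split.
    by rewrite oner_neq0 orTb !orbT.
  rewrite !a_def /= /P RI_rec RI1 RI0 -!mul_polyC !expr2.
  rewrite ?polyCD ?polyCN ?polyCB ?polyCM ?polyC0 ?polyC1 /f1 /f0 ?polyCD ?polyCN ?polyCB ?polyCM.
  ring.
have [F0|FN] := boolP ((f1 == 0) && (f0 == 0)).
  move/andP: F0 => [/eqP e1 /eqP e0].
  exists 0, 1, 0, A1, (a m.+3 - A1 * b1), 0, 0, 0; split.
    by rewrite oner_neq0 orTb !orbT.
  apply/eqP; rewrite -subr_eq0; apply/eqP.
  rewrite !a_def /= /P RI_rec -!mul_polyC !expr2.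
  transitivity ((f1%:P * 'X + f0%:P) * RIpoly rho beta tau gamma m.+1); last first.
    by rewrite e1 e0 !polyC0 mul0r add0r mul0r.
  rewrite /f1 /f0 /a ?polyCD ?polyCN ?polyCB ?polyCM ?polyC0 ?polyC1.
  ring.
set A0 := rho m.+1; set b0 := beta m.+1; set B0 := tau m.+1; set c0 := gamma m.+1.
set g1 := B0 - a m.+1 * A0.
set g0 := - B0 * c0 + a m.+1 * A0 * b0 - a m.+1 * a m.+2.
exists g1, g0, (g1 * A1), (g1 * (a m.+3 - A1 * b1) + g0 * A1 - f1 * a m.+1),
  (g0 * (a m.+3 - A1 * b1) - f0 * a m.+1), (f1 * B0), (f1 * (- B0 * c0) + f0 * B0),
  (f0 * (- B0 * c0)); split.
  have hB0 : B0 != 0 by apply: htau.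
  case: (eqVneq f1 0) FN => [e|f1N] FN.
    rewrite /= in FN.
    rewrite e !mul0r; do 6 (apply/orP; right); apply/orP; left.
    have -> : 0 + f0 * B0 = f0 * B0 by ring.
    by rewrite mulf_neq0.
  by rewrite (mulf_neq0 f1N hB0) orTb !orbT.
rewrite !a_def /= /P !RI_rec -!mul_polyC !expr2.
rewrite /g1 /g0 /f1 /f0 /a ?polyCD ?polyCN ?polyCB ?polyCM.
ring.
Qed.
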